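(* Let $G$ be a finite simple graph and let $u,v\in V(G)$ with $uv\in E(G)$. Suppose that $\hat{E}_{u,v}=\emptyset$, where $\hat{E}_{u,v}=\{xy\in E(G): x\in N_G(u,\bar{v}),\ y\in N_G(\bar{u},v)\}$. Then $\mathbf{a}_4(G)\ge \mathbf{a}_4(G_{u\rightarrow v})$, and the inequality is strict if $N_G(\bar{u},v)\neq\emptyset$ and $N_G(u,\bar{v})\neq\emptyset$.
   Context: For a graph $G$ on $n$ vertices with adjacency matrix $\mathbf{A}(G)$, write $\det(\lambda \mathbf{I}-\mathbf{A}(G))=\sum_{i=0}^n \mathbf{a}_i(G)\lambda^{n-i}$; $\mathbf{a}_4(G)$ is the fourth adjacency coefficient (equivalently, $\mathbf{a}_4(G)$ equals the number of 2-matchings of $G$ minus twice the number of 4-cycles of $G$). For $u,v\in V(G)$: $N_G(u,\bar{v})=\{x\in V(G)\setminus\{u,v\}: xu\in E(G),\ xv\notin E(G)\}$ and $N_G(\bar{u},v)=\{x\in V(G)\setminus\{u,v\}: xv\in E(G),\ xu\notin E(G)\}$. The compression $G_{u\rightarrow v}$ is the graph obtained from $G$ by deleting all edges between $u$ and $N_G(u,\bar{v})$ and adding all edges between $v$ and $N_G(u,\bar{v})$. *)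

(* Defs.v *)
From mathcomp Require Import all_boot all_order all_algebra.
Set Implicit Arguments. Unset Strict Implicit. Unset Printing Implicit Defensive.
Import GRing.Theory Num.Theory.
Local Open Scope ring_scope.

Definition simple_graph (n : nat) (e : rel 'I_n) : Prop :=
  symmetric e /\ irreflexive e.

Definition adjmx (n : nat) (e : rel 'I_n) : 'M[int]_n :=
  \matrix_(i, j) (e i j)%:R.

(* det(lambda I - A) = sum_i a_i lambda^(n-i); a_4 is the coefficient of
   lambda^(n-4) of the characteristic polynomial (0 when n < 4). *)
Definition a4 (n : nat) (e : rel 'I_n) : int :=
  if (4 <= n)%N then (char_poly (adjmx e))`_(n - 4) else 0.

Definition Nbar (n : nat) (e : rel 'I_n) (u v : 'I_n) : {set 'I_n} :=
  [set x | (x != u) && (x != v) && e x u && ~~ e x v].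

(* The compression G_{u -> v}: delete all edges between u and N_G(u,\bar v),
   add all edges between v and N_G(u,\bar v). *)
Definition compress (n : nat) (e : rel 'I_n) (u v : 'I_n) : rel 'I_n :=
  fun x y =>
    let N := Nbar e u v in
    [|| e x y && ~~ (((x == u) && (y \in N)) || ((y == u) && (x \in N))),
        (x == v) && (y \in N)
      | (y == v) && (x \in N)].

(* Main.v *)
Require Import Defs.
From mathcomp Require Import all_boot all_order all_algebra.
From mathcomp Require Import ring zify.
From mathcomp Require Import all_field.
Set Implicit Arguments. Unset Strict Implicit. Unset Printing Implicit Defensive.
Import GRing.Theory Num.Theory.
Local Open Scope ring_scope.

Section ES.
Variable R : comNzRingType.
Fixpoint es (l : seq R) (k : nat) : R :=
  match l with
  | [::] => (k == 0)%:R
  | x :: l' => if k is k'.+1 then es l' k + x * es l' k' else 1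
  end.

Lemma es_big l k : (size l < k)%N -> es l k = 0.
Proof.
elim: l k => [|x l IH] [|k] //= H.
by rewrite !IH ?mulr0 ?addr0 //; apply: ltnW.
Qed.

Lemma es0 l : es l 0 = 1. Proof. by case: l. Qed.

Lemma coef_prodXsub l j : (\prod_(x <- l) ('X - x%:P))`_j =
  if (j <= size l)%N then (-1)^+(size l - j) * es l (size l - j) else 0.
Proof.
elim: l j => [|x l IH] j.
  by rewrite big_nil coef1 /=; case: j => [|j] /=; rewrite ?expr0 ?mul1r.
rewrite big_cons mulrBl coefB coefXM coefCM /=.
case: j => [|i] /=.
  rewrite IH !leq0n !subn0 /= exprS (@es_big l (size l).+1) //; ring.
rewrite !IH ltnS subSS.
case: (ltngtP i (size l)) => Hi.
- have -> : (size l - i = (size l - i.+1).+1)%N by rewrite subnSK.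
  rewrite exprS; ring.
- by rewrite mulr0 subr0.
- by subst i; rewrite subnn /= mulr0 subr0 es0.
Qed.

Definition ps (l : seq R) (k : nat) := \sum_(x <- l) x ^+ k.

Lemma newton4 l :
  [/\ es l 1 = ps l 1, 2 * es l 2 = ps l 1 ^+ 2 - ps l 2,
      6 * es l 3 = ps l 1 ^+ 3 - 3 * ps l 1 * ps l 2 + 2 * ps l 3 &
      24 * es l 4 = ps l 1 ^+ 4 - 6 * ps l 1 ^+ 2 * ps l 2 + 3 * ps l 2 ^+ 2
                    + 8 * ps l 1 * ps l 3 - 6 * ps l 4].
Proof.
elim: l => [|x l [IH1 IH2 IH3 IH4]].
  by rewrite /ps !big_nil /=; split; rewrite ?expr0n /= ?mulr0 ?subr0 ?addr0.
rewrite /ps !big_cons -!/(ps l _) /=.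
have E0 := es0 l.
split.
- by rewrite E0 IH1; ring.
- have -> : 2 * (es l 2 + x * es l 1) = 2 * es l 2 + 2 * x * es l 1 by ring.
  rewrite IH2 IH1; ring.
- have -> : 6 * (es l 3 + x * es l 2) = 6 * es l 3 + 3 * x * (2 * es l 2) by ring.
  rewrite IH3 IH2; ring.
- have -> : 24 * (es l 4 + x * es l 3) = 24 * es l 4 + 4 * x * (6 * es l 3) by ring.
  rewrite IH4 IH3; ring.
Qed.
End ES.
Lemma char_poly_conj (F : fieldType) n (P D : 'M[F]_n) : P \in unitmx ->
  char_poly (invmx P *m D *m P) = char_poly D.
Proof.
move=> Pu; rewrite /char_poly /char_poly_mx.
have -> : 'X%:M - map_mx polyC (invmx P *m D *m P) =
    map_mx polyC (invmx P) *m ('X%:M - map_mx polyC D) *m map_mx polyC P.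
  rewrite mulmxBr mulmxBl !map_mxM scalar_mxC.
  rewrite -[_%:M *m _ *m _]mulmxA.
  have -> : map_mx polyC (invmx P) *m map_mx polyC P = 1%:M.
    by rewrite -map_mxM mulVmx // map_mx1.
  by rewrite mulmx1.
rewrite det_mulmx det_mulmx !det_map_mx mulrAC -rmorphM -det_mulmx mulVmx //.
by rewrite det1 rmorph1 mul1r.
Qed.

Lemma diag_expr (R : comNzRingType) n (d : 'rV[R]_n) k :
  (diag_mx d) ^+ k = \matrix_(i, j) ((d 0 i) ^+ k *+ (i == j)).
Proof.
elim: k => [|k IH].
  by apply/matrixP => i j; rewrite !mxE expr0.
rewrite exprS IH -mulmxE mul_diag_mx; apply/matrixP => i j; rewrite !mxE.
by rewrite mulrnAr exprS.
Qed.

Lemma conj_expr (F : fieldType) n (P D : 'M[F]_n) k : P \in unitmx ->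
  (invmx P *m D *m P) ^+ k = invmx P *m D ^+ k *m P.
Proof.
move=> Pu; elim: k => [|k IH].
  by rewrite !expr0 mulmx1 mulVmx.
rewrite !exprS IH -!mulmxE !mulmxA -[invmx P *m D *m P *m invmx P]mulmxA.
by rewrite mulmxV // mulmx1.
Qed.

Lemma charpoly_tr n (A : 'M[int]_n) : A^T = A -> (4 <= n)%N ->
  24 * (char_poly A)`_(n-4) =
    (\tr A) ^+ 4 - 6 * (\tr A) ^+ 2 * \tr (A ^+ 2) + 3 * (\tr (A ^+ 2)) ^+ 2
    + 8 * \tr A * \tr (A ^+ 3) - 6 * \tr (A ^+ 4).
Proof.
move=> AT n4.
apply: (@intr_inj algC).
pose B := map_mx (intr : int -> algC) A.
have trB k : (\tr (A ^+ k))%:~R = \tr (B ^+ k) :> algC.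
  have mX : B ^+ k = map_mx intr (A ^+ k).
    elim: k => [|k IH]; first by rewrite !expr0 -!idmxE map_mx1.
    by rewrite !exprS IH -!mulmxE map_mxM.
  rewrite mX /mxtrace rmorph_sum; apply: eq_bigr => i _; by rewrite mxE.
have cB : ((char_poly A)`_(n-4))%:~R = (char_poly B)`_(n-4) :> algC.
  by rewrite -map_char_poly coef_map.
have trB1 : (\tr A)%:~R = \tr (B ^+ 1) :> algC by rewrite -trB expr1.
rewrite ?(rmorph_nat, intrM, rmorphXn, intrB, intrN, intrD) trB1 !trB cB.
have Breal : B \is a realmx by apply/mxOverP => i j; rewrite mxE realz.
have Bsym : B \is symmetricmx.
  apply/is_hermitianmxP; rewrite expr0 scale1r; apply/matrixP => i j.
  by rewrite !mxE /= -[in RHS]AT mxE.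
have /orthomx_spectralP HB := symmetric_normalmx Bsym Breal.
set P := spectralmx B in HB; set d := spectral_diag B in HB.
have Pu : P \in unitmx by apply: spectral_unit.
pose l := [seq d 0 i | i <- enum 'I_n].
have sl : size l = n by rewrite size_map size_enum_ord.
have cpB : char_poly B = \prod_(x <- l) ('X - x%:P).
  rewrite HB char_poly_conj // char_poly_trig ?diag_mx_is_trig //.
  rewrite big_map big_enum /=; apply: eq_bigr => i _; by rewrite mxE eqxx mulr1n.
have tB k : \tr (B ^+ k) = ps l k.
  rewrite HB conj_expr // mxtrace_mulC mulmxA mulmxV // mul1mx diag_expr.
  rewrite /ps big_map big_enum /=; apply: eq_bigr => i _; by rewrite mxE eqxx mulr1n.
have [_ _ _ N4] := newton4 l.
rewrite cpB coef_prodXsub sl leq_subr subKn // !tB.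
transitivity (24 * es l 4); first by ring.
rewrite N4; ring.
Qed.
Definition W n (f : rel 'I_n) (a c : 'I_n) : nat :=
  (\sum_b (nat_of_bool (f a b) * nat_of_bool (f b c)))%N.
Definition T4 n (f : rel 'I_n) : nat := (\sum_a \sum_c W f a c ^ 2)%N.
Definition T2 n (f : rel 'I_n) : nat := (\sum_a \sum_b nat_of_bool (f a b))%N.

Section Comb.
Variables (n : nat) (e : rel 'I_n) (u v : 'I_n).
Hypotheses (esym : symmetric e) (eirr : irreflexive e) (euv : e u v).
Hypothesis hatE : forall x y, x \in Nbar e u v -> y \in Nbar e v u -> ~~ e x y.

Local Notation e' := (compress e u v).
Local Notation R b := ((b != u) && (b != v)).

Lemma uv : u != v.
Proof. by apply: contraTneq euv => ->; rewrite eirr. Qed.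

Lemma split3 (F : 'I_n -> nat) :
  (\sum_b F b = F u + F v + \sum_(b | R b) F b)%N.
Proof.
rewrite (bigD1 u) //= (bigD1 v) /=; last by rewrite eq_sym uv.
by rewrite addnA.
Qed.

Lemma split33 (F : 'I_n -> 'I_n -> nat) :
  (\sum_a \sum_c F a c = F u u + F u v + F v u + F v v
     + \sum_(c | R c) (F u c + F v c) + \sum_(a | R a) (F a u + F a v)
     + \sum_(a | R a) \sum_(c | R c) F a c)%N.
Proof.
under eq_bigr => a _ do rewrite (split3 (F a)).
rewrite split3 !big_split /=; lia.
Qed.

Lemma e'_rest a b : R a -> R b -> e' a b = e a b.
Proof.
move=> /andP[au av] /andP[bu bv]; rewrite /compress /Nbar !inE.
by rewrite (negPf au) (negPf av) (negPf bu) (negPf bv) /= andbT orbF.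
Qed.

Lemma e'_au a : R a -> e' a u = e a u && e a v.
Proof.
move=> /andP[au av]; rewrite /compress /Nbar !inE.
rewrite (negPf au) (negPf av) eqxx (negPf uv) /= ?andbF ?orbF.
by case: (e a u); case: (e a v).
Qed.

Lemma e'_av a : R a -> e' a v = e a u || e a v.
Proof.
move=> /andP[au av]; rewrite /compress /Nbar !inE.
rewrite (negPf au) (negPf av) eqxx eq_sym (negPf uv) /= ?andbF ?orbF.
by case: (e a u); case: (e a v).
Qed.

Lemma e'_sym : symmetric e'.
Proof.
move=> x y; rewrite /compress esym.
by case: (x == u); case: (y == u); case: (x == v); case: (y == v);
   case: (x \in _); case: (y \in _); rewrite /= ?orbF ?andbF ?orbT.
Qed.

Lemma e'_uv : e' u v. Proof. by rewrite /compress euv /Nbar !inE !eqxx /= !andbF. Qed.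
Lemma e'_uu : e' u u = false.
Proof. by rewrite /compress eirr /Nbar !inE !eqxx /= ?andbF. Qed.
Lemma e'_vv : e' v v = false.
Proof. by rewrite /compress eirr /Nbar !inE !eqxx /= ?andbF. Qed.


Lemma Wuc c : R c ->
  W e u c = (e c v + \sum_(b | R b) (e b u * e b c))%N.
Proof.
move=> Rc; rewrite /W split3 eirr euv (esym v c) add0n mul1n.
by congr (_ + _)%N; apply: eq_bigr => b _; rewrite esym.
Qed.

Lemma Wvc c : R c ->
  W e v c = (e c u + \sum_(b | R b) (e b v * e b c))%N.
Proof.
move=> Rc; rewrite /W split3 eirr (esym v u) euv (esym u c) addn0 mul1n.
by congr (_ + _)%N; apply: eq_bigr => b _; rewrite esym.
Qed.

Lemma W'uc c : R c ->
  W e' u c = ((e c u || e c v) + \sum_(b | R b) ((e b u && e b v) * e b c))%N.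
Proof.
move=> Rc; rewrite /W split3 e'_uu e'_uv (e'_sym v c) (e'_av Rc) add0n mul1n.
congr (_ + _)%N; apply: eq_bigr => b Rb.
by rewrite (e'_sym u b) (e'_au Rb) (e'_rest Rb Rc).
Qed.

Lemma W'vc c : R c ->
  W e' v c = ((e c u && e c v) + \sum_(b | R b) ((e b u || e b v) * e b c))%N.
Proof.
move=> Rc; rewrite /W split3 e'_vv (e'_sym v u) e'_uv (e'_sym u c) (e'_au Rc).
rewrite addn0 mul1n.
congr (_ + _)%N; apply: eq_bigr => b Rb.
by rewrite (e'_sym v b) (e'_av Rb) (e'_rest Rb Rc).
Qed.

Lemma row_ineq c : R c ->
  (W e u c ^ 2 + W e v c ^ 2 <= W e' u c ^ 2 + W e' v c ^ 2)%N.
Proof.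
move=> Rc; rewrite (Wuc Rc) (Wvc Rc) (W'uc Rc) (W'vc Rc).
set A := (\sum_(b | R b) ((e b u && e b v) * e b c))%N.
set P := (\sum_(b | R b) ((e b u && ~~ e b v) * e b c))%N.
set K := (\sum_(b | R b) ((~~ e b u && e b v) * e b c))%N.
have -> : (\sum_(b | R b) (e b u * e b c) = A + P)%N.
  rewrite /A /P -big_split; apply: eq_bigr => b _.
  by case: (e b u); case: (e b v); case: (e b c).
have -> : (\sum_(b | R b) (e b v * e b c) = A + K)%N.
  rewrite /A /K -big_split; apply: eq_bigr => b _.
  by case: (e b u); case: (e b v); case: (e b c).
have -> : (\sum_(b | R b) ((e b u || e b v) * e b c) = A + P + K)%N.
  rewrite /A /P /K -!big_split; apply: eq_bigr => b _.
  by case: (e b u); case: (e b v); case: (e b c).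
have HP : ~~ e c u && e c v -> P = 0%N.
  move=> /andP[ncu cv]; rewrite /P big1 // => b Rb.
  case: (boolP (e b u && ~~ e b v)) => // /andP[bu nbv].
  have := @hatE b c; rewrite /Nbar !inE Rb bu nbv cv ncu.
  move: Rc => /andP[cu' cv'] /=; rewrite cu' cv' => /(_ isT isT) /negPf ->.
  by [].
have HK : e c u && ~~ e c v -> K = 0%N.
  move=> /andP[cu ncv]; rewrite /K big1 // => b Rb.
  case: (boolP (~~ e b u && e b v)) => // /andP[nbu bv].
  have Hb : b \in Nbar e v u by rewrite inE; move: Rb => /andP[-> ->]; rewrite bv nbu.
  have Hc : c \in Nbar e u v by rewrite inE; move: Rc => /andP[-> ->]; rewrite cu ncv.
  by rewrite esym (negPf (hatE Hc Hb)).
case: (e c u) (e c v) HP HK => [] [] /= HP HK.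
- nia.
- rewrite HK //; nia.
- rewrite HP //; nia.
- nia.
Qed.


Lemma W_sym (f : rel 'I_n) : symmetric f -> forall a c, W f a c = W f c a.
Proof.
by move=> fs a c; rewrite /W; apply: eq_bigr => b _; rewrite mulnC (fs a b) (fs b c).
Qed.

Lemma pair_ineq a c : R a -> R c -> (W e a c <= W e' a c)%N.
Proof.
move=> Ra Rc; rewrite /W !split3 -!addnA.
have -> : (\sum_(b | R b) (e' a b * e' b c) = \sum_(b | R b) (e a b * e b c))%N.
  by apply: eq_bigr => b Rb; rewrite (e'_rest Ra Rb) (e'_rest Rb Rc).
rewrite !addnA leq_add2r (e'_au Ra) (e'_av Ra) (e'_sym u c) (e'_au Rc).
rewrite (e'_sym v c) (e'_av Rc) (esym u c) (esym v c).
by case: (e a u); case: (e a v); case: (e c u); case: (e c v).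
Qed.

Lemma card_Nbar_uv :
  #|Nbar e u v| = (\sum_(b | R b) (e b u && ~~ e b v))%N.
Proof.
rewrite -sum1_card big_mkcond /= split3 !inE !eqxx /= andbF add0n.
rewrite add0n; apply: eq_bigr => b Rb; rewrite inE Rb.
by case: (e b u); case: (e b v).
Qed.

Lemma card_Nbar_vu :
  #|Nbar e v u| = (\sum_(b | R b) (~~ e b u && e b v))%N.
Proof.
rewrite -sum1_card big_mkcond /= split3 !inE !eqxx /= andbF add0n.
apply: eq_bigr => b /andP[bu bv]; rewrite inE bu bv /=.
by case: (e b u); case: (e b v).
Qed.

Lemma corner_ineq :
  (W e u u ^ 2 + W e u v ^ 2 + W e v u ^ 2 + W e v v ^ 2
     + 2 * #|Nbar e u v| * #|Nbar e v u|
   <= W e' u u ^ 2 + W e' u v ^ 2 + W e' v u ^ 2 + W e' v v ^ 2)%N.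
Proof.
rewrite card_Nbar_uv card_Nbar_vu /W !split3 !eirr e'_uu e'_vv e'_uv (e'_sym v u) e'_uv.
rewrite (esym v u) euv.
set A := (\sum_(b | R b) (e b u && e b v))%N.
set P := (\sum_(b | R b) (e b u && ~~ e b v))%N.
set K := (\sum_(b | R b) (~~ e b u && e b v))%N.
have E1 : (\sum_(b | R b) (e u b * e b u) = A + P)%N.
  rewrite /A /P -big_split; apply: eq_bigr => b _; rewrite (esym u b).
  by case: (e b u); case: (e b v).
have E2 : (\sum_(b | R b) (e v b * e b v) = A + K)%N.
  rewrite /A /K -big_split; apply: eq_bigr => b _; rewrite (esym v b).
  by case: (e b u); case: (e b v).
have E3 : (\sum_(b | R b) (e u b * e b v) = A)%N.
  rewrite /A; apply: eq_bigr => b _; rewrite (esym u b).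
  by case: (e b u); case: (e b v).
have E4 : (\sum_(b | R b) (e v b * e b u) = A)%N.
  rewrite /A; apply: eq_bigr => b _; rewrite (esym v b).
  by case: (e b u); case: (e b v).
have F1 : (\sum_(b | R b) (e' u b * e' b u) = A)%N.
  rewrite /A; apply: eq_bigr => b Rb; rewrite (e'_sym u b) (e'_au Rb).
  by case: (e b u); case: (e b v).
have F2 : (\sum_(b | R b) (e' v b * e' b v) = A + P + K)%N.
  rewrite /A /P /K -!big_split; apply: eq_bigr => b Rb; rewrite (e'_sym v b) (e'_av Rb).
  by case: (e b u); case: (e b v).
have F3 : (\sum_(b | R b) (e' u b * e' b v) = A)%N.
  rewrite /A; apply: eq_bigr => b Rb; rewrite (e'_sym u b) (e'_au Rb) (e'_av Rb).
  by case: (e b u); case: (e b v).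
have F4 : (\sum_(b | R b) (e' v b * e' b u) = A)%N.
  rewrite /A; apply: eq_bigr => b Rb; rewrite (e'_sym v b) (e'_au Rb) (e'_av Rb).
  by case: (e b u); case: (e b v).
rewrite E1 E2 E3 E4 F1 F2 F3 F4 /=; nia.
Qed.

Lemma T2_eq : T2 e' = T2 e.
Proof.
rewrite /T2 (split33 (fun a b => nat_of_bool (e' a b))).
rewrite (split33 (fun a b => nat_of_bool (e a b))).
rewrite e'_uu e'_vv e'_uv (e'_sym v u) e'_uv !eirr euv (esym v u) euv.
have -> : (\sum_(c | R c) (e' u c + e' v c) = \sum_(c | R c) (e u c + e v c))%N.
  apply: eq_bigr => c Rc; rewrite (e'_sym u c) (e'_au Rc) (e'_sym v c) (e'_av Rc).
  by rewrite (esym u c) (esym v c); case: (e c u); case: (e c v).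
have -> : (\sum_(a | R a) (e' a u + e' a v) = \sum_(a | R a) (e a u + e a v))%N.
  apply: eq_bigr => a Ra; rewrite (e'_au Ra) (e'_av Ra).
  by case: (e a u); case: (e a v).
have -> : (\sum_(a | R a) \sum_(c | R c) nat_of_bool (e' a c) =
           \sum_(a | R a) \sum_(c | R c) nat_of_bool (e a c))%N.
  by apply: eq_bigr => a Ra; apply: eq_bigr => c Rc; rewrite (e'_rest Ra Rc).
by [].
Qed.

Lemma T4_ineq : (T4 e + 2 * #|Nbar e u v| * #|Nbar e v u| <= T4 e')%N.
Proof.
rewrite /T4 (split33 (fun a c => (W e a c ^ 2)%N)) (split33 (fun a c => (W e' a c ^ 2)%N)).
have h1 := corner_ineq.
have h2 : (\sum_(c | R c) (W e u c ^ 2 + W e v c ^ 2) <=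
           \sum_(c | R c) (W e' u c ^ 2 + W e' v c ^ 2))%N.
  by apply: leq_sum => c Rc; exact: row_ineq.
have h3 : (\sum_(a | R a) (W e a u ^ 2 + W e a v ^ 2) <=
           \sum_(a | R a) (W e' a u ^ 2 + W e' a v ^ 2))%N.
  apply: leq_sum => a Ra; rewrite (W_sym esym a u) (W_sym esym a v).
  by rewrite (W_sym e'_sym a u) (W_sym e'_sym a v); exact: row_ineq.
have h4 : (\sum_(a | R a) \sum_(c | R c) W e a c ^ 2 <=
           \sum_(a | R a) \sum_(c | R c) W e' a c ^ 2)%N.
  apply: leq_sum => a Ra; apply: leq_sum => c Rc.
  by rewrite leq_sqr; exact: pair_ineq.
lia.
Qed.

Lemma e'_irr : irreflexive e'.
Proof.
move=> x; have [->|xu] := eqVneq x u; first exact: e'_uu.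
have [->|xv] := eqVneq x v; first exact: e'_vv.
by rewrite e'_rest ?xu ?xv.
Qed.

End Comb.

Lemma adj_tr n (f : rel 'I_n) : symmetric f -> (adjmx f)^T = adjmx f.
Proof. by move=> fs; apply/matrixP => i j; rewrite !mxE fs. Qed.

Lemma adj2 n (f : rel 'I_n) :
  adjmx f ^+ 2 = \matrix_(i, k) ((W f i k)%:R : int).
Proof.
apply/matrixP => i k; rewrite expr2 -mulmxE !mxE /W natr_sum.
by apply: eq_bigr => j _; rewrite !mxE natrM.
Qed.

Lemma tr1 n (f : rel 'I_n) : irreflexive f -> \tr (adjmx f) = 0.
Proof. by move=> fi; rewrite /mxtrace big1 // => i _; rewrite mxE fi. Qed.

Lemma tr2 n (f : rel 'I_n) : symmetric f -> \tr (adjmx f ^+ 2) = (T2 f)%:R.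
Proof.
move=> fs; rewrite adj2 /mxtrace /T2 natr_sum; apply: eq_bigr => i _.
rewrite mxE /W; congr (_%:R); apply: eq_bigr => j _; rewrite (fs j i).
by case: (f i j).
Qed.

Lemma tr4 n (f : rel 'I_n) : symmetric f -> \tr (adjmx f ^+ 4) = (T4 f)%:R.
Proof.
move=> fs; rewrite (_ : 4%N = 2 + 2)%N // exprD adj2 -mulmxE /mxtrace /T4 natr_sum.
apply: eq_bigr => i _; rewrite !mxE natr_sum; apply: eq_bigr => k _.
by rewrite !mxE (W_sym fs k i) natrX.
Qed.

Lemma a4_formula n (f : rel 'I_n) : simple_graph f -> (4 <= n)%N ->
  24 * a4 f = 3 * (T2 f)%:R ^+ 2 - 6 * (T4 f)%:R.
Proof.
move=> [fs fi] n4; rewrite /a4 n4 charpoly_tr ?adj_tr //.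
rewrite tr1 // tr2 // tr4 //; ring.
Qed.

Unset Implicit Arguments.
Set Strict Implicit.

Theorem theorem3p2 (n : nat) (e : rel 'I_n) (u v : 'I_n) :
  simple_graph e ->
  e u v ->
  (* \hat E_{u,v} is empty *)
  (forall x y, x \in Nbar e u v -> y \in Nbar e v u -> ~~ e x y) ->
  a4 (compress e u v) <= a4 e /\
  (Nbar e v u != set0 -> Nbar e u v != set0 -> a4 (compress e u v) < a4 e).
Proof.
move=> [es ei] euv hatE.
have e's : simple_graph (compress e u v).
  by split; [exact: e'_sym | exact: e'_irr].
case: (leqP 4 n) => n4.
  have h := a4_formula (conj es ei) n4.
  have h' := a4_formula e's n4.
  rewrite (T2_eq es ei euv) in h'.
  have hT := T4_ineq es ei euv hatE.
  have hT' : ((T4 e)%:R + 2 * (#|Nbar e u v|)%:R * (#|Nbar e v u|)%:R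
               <= (T4 (compress e u v))%:R :> int).
    by rewrite -!natrM -natrD ler_nat.
  move: h h' hT'.
  set X := (T2 e)%:R ^+ 2.
  set p := #|Nbar e u v|; set q := #|Nbar e v u|.
  move=> h h' hT'; split.
    lia.
  rewrite -!card_gt0 -/p -/q => q0 p0.
  nia.
rewrite /a4 leqNgt n4 /=; split => // H1 H2.
have [y Hy] := set0Pn _ H1; have [x Hx] := set0Pn _ H2.
rewrite !inE in Hx Hy.
case/andP: Hx => /andP[/andP[xu xv] xeu] nxev.
case/andP: Hy => /andP[/andP[yv yu] yev] nyeu.
have xy : x != y by apply: contraNneq nxev => ->.
have uv' := uv ei euv.
have a1 : (nat_of_ord x != nat_of_ord u) := xu.
have a2 : (nat_of_ord x != nat_of_ord v) := xv.
have a3 : (nat_of_ord y != nat_of_ord u) := yu.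
have a4 : (nat_of_ord y != nat_of_ord v) := yv.
have a5 : (nat_of_ord x != nat_of_ord y) := xy.
have a6 : (nat_of_ord u != nat_of_ord v) := uv'.
have := ltn_ord x; have := ltn_ord y; have := ltn_ord u; have := ltn_ord v.
lia.
Qed.
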